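(* Consider the 2-node network game with $\pi^M=W_{soc}$, $a_1=a_2=a>0$, $c_1=c_2=c>0$, $b_1,b_2>0$ with $1<b_1/b_2\le 3$, and $f_{12}=\infty$. Then the GNE is unique and is given by $$r^*=\frac{ac(b_2-b_1)}{(b_1+b_2)(b_1b_2+2c^2)+c(b_1^2+b_2^2+4b_1b_2)},\qquad q_1^*=\frac{a-b_1r^*}{2(b_1+c)},\qquad q_2^*=\frac{a+b_2r^*}{2(b_2+c)}.$$ At this GNE, $a-b_1r^*\ge 0$, $a+b_2r^*\ge0$, and $r^*=\frac{b_2q_2^*-b_1q_1^*}{b_1+b_2}$.
   Context: 2-node network game. There are generators $G_1,G_2$. Generator $k$ chooses $q_k\ge 0$ and has profit $\pi^G_k=q_kp_k(q_k+r_k)-c_kq_k^2$, where $p_k(d)=a_k-b_kd$. The market maker chooses $r\in\mathbb{R}$ and sets $r_1=r$, $r_2=-r$, subject to $-q_1\le r\le q_2$ (there is no line limit). Social welfare objective. The market maker maximizes $$W_{soc}(q,r)=\sum_k\Big(\int_0^{q_k+r_k}p_k(w)dw-c_kq_k^2\Big).$$ GNE. A triple $(q_1^*,q_2^*,r^* )$ with $r^*$ feasible given $q^*$ is a GNE if both of the following hold: - each $q_k^*$ maximizes $\pi^G_k$ over $q_k\ge0$, given the other generator's quantity and $r^*$; - $r^*$ maximizes $W_{soc}(q^*,\cdot)$ over the feasible set determined by $q^*$. *)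

(* Defs.v *)
From Stdlib Require Import Reals Lra.
Open Scope R_scope.

Definition price (a b d : R) : R := a - b * d.

(* Consumer benefit  int_0^d p_k(w) dw  for the affine demand p_k,
   written in closed form: a d - b d^2 / 2. *)
Definition benefit (a b d : R) : R := a * d - b * d ^ 2 / 2.

Definition profitG (a b c q rk : R) : R := q * price a b (q + rk) - c * q ^ 2.

(* Feasible set of the market maker: -q1 <= r <= q2, with r1 = r, r2 = -r
   (no line limit, f12 = infinity). *)
Definition feasible (q1 q2 r : R) : Prop := - q1 <= r /\ r <= q2.

Definition Wsoc (a1 b1 c1 a2 b2 c2 q1 q2 r : R) : R :=
  (benefit a1 b1 (q1 + r) - c1 * q1 ^ 2) + (benefit a2 b2 (q2 + - r) - c2 * q2 ^ 2).

Definition is_GNE (a1 b1 c1 a2 b2 c2 q1 q2 r : R) : Prop :=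
  0 <= q1 /\ 0 <= q2 /\ feasible q1 q2 r /\
  (forall q1', 0 <= q1' -> profitG a1 b1 c1 q1' r <= profitG a1 b1 c1 q1 r) /\
  (forall q2', 0 <= q2' -> profitG a2 b2 c2 q2' (- r) <= profitG a2 b2 c2 q2 (- r)) /\
  (forall r', feasible q1 q2 r' ->
     Wsoc a1 b1 c1 a2 b2 c2 q1 q2 r' <= Wsoc a1 b1 c1 a2 b2 c2 q1 q2 r).

(* Main.v *)
Require Import Defs.
From Stdlib Require Import Reals Lra Psatz.
Open Scope R_scope.

Lemma prof_id a b c q r : b + c <> 0 ->
  profitG a b c q r = profitG a b c ((a - b*r)/(2*(b+c))) r - (b+c)*(q - (a-b*r)/(2*(b+c)))^2.
Proof. intros H. unfold profitG, price. field. auto. Qed.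

Lemma W_id a b1 b2 c q1 q2 r : b1 + b2 <> 0 ->
  Wsoc a b1 c a b2 c q1 q2 r = Wsoc a b1 c a b2 c q1 q2 ((b2*q2-b1*q1)/(b1+b2))
     - (b1+b2)/2*(r - (b2*q2-b1*q1)/(b1+b2))^2.
Proof. intros H. unfold Wsoc, benefit. field. auto. Qed.

Lemma feas b1 b2 q1 q2 : 0 <= q1 -> 0 <= q2 -> 0 < b1 -> 0 < b2 ->
  feasible q1 q2 ((b2*q2-b1*q1)/(b1+b2)).
Proof.
  intros h1 h2 hb1 hb2. set (r := (b2*q2-b1*q1)/(b1+b2)).
  assert (E : r*(b1+b2) = b2*q2-b1*q1) by (unfold r; field; lra).
  unfold feasible; split; nra.
Qed.

Lemma gen_opt a b c q0 r : 0 < b -> 0 < c -> 0 <= a - b*r ->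
  q0 = (a - b*r)/(2*(b+c)) ->
  0 <= q0 /\ forall q', 0 <= q' -> profitG a b c q' r <= profitG a b c q0 r.
Proof.
  intros hb hc hA ->. split.
  - apply Rmult_le_pos; [lra|]. left; apply Rinv_0_lt_compat; lra.
  - intros q' _. rewrite (prof_id a b c q' r) by lra.
    assert (0 <= (b+c)*(q' - (a-b*r)/(2*(b+c)))^2) by (apply Rmult_le_pos; [lra| apply pow2_ge_0]).
    lra.
Qed.

Lemma gen_uniq a b c q r : 0 < b -> 0 < c -> 0 <= q ->
  (forall q', 0 <= q' -> profitG a b c q' r <= profitG a b c q r) ->
  (0 <= a - b*r /\ q = (a-b*r)/(2*(b+c))) \/ (a - b*r < 0 /\ q = 0).
Proof.
  intros hb hc hq H. destruct (Rle_or_lt 0 (a - b*r)) as [hA|hA].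
  - left; split; auto.
    destruct (gen_opt a b c _ r hb hc hA eq_refl) as [h0 _].
    specialize (H _ h0). rewrite (prof_id a b c q r) in H by lra.
    set (q0 := (a - b*r)/(2*(b+c))) in *.
    assert (Hs : (b+c)*(q-q0)^2 <= 0) by lra.
    assert (0 <= (q-q0)^2) by apply pow2_ge_0.
    assert ((q-q0)^2 = 0) by nra. nra.
  - right; split; auto.
    specialize (H 0 (Rle_refl 0)). unfold profitG, price in H. nra.
Qed.

Theorem mainTheorem4 (a b1 b2 c : R) :
  0 < a -> 0 < c -> 0 < b1 -> 0 < b2 -> 1 < b1 / b2 -> b1 / b2 <= 3 ->
  let r0 := a * c * (b2 - b1) /
            ((b1 + b2) * (b1 * b2 + 2 * c ^ 2) + c * (b1 ^ 2 + b2 ^ 2 + 4 * b1 * b2)) in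
  let q10 := (a - b1 * r0) / (2 * (b1 + c)) in
  let q20 := (a + b2 * r0) / (2 * (b2 + c)) in
  is_GNE a b1 c a b2 c q10 q20 r0 /\
  (forall q1 q2 r, is_GNE a b1 c a b2 c q1 q2 r -> q1 = q10 /\ q2 = q20 /\ r = r0) /\
  0 <= a - b1 * r0 /\ 0 <= a + b2 * r0 /\
  r0 = (b2 * q20 - b1 * q10) / (b1 + b2).
Proof.
  intros ha hc hb1 hb2 hr1 hr3 r0 q10 q20.
  assert (hgt : b2 < b1).
  { apply Rmult_lt_compat_r with (r := b2) in hr1; [|lra].
    unfold Rdiv in hr1. rewrite Rmult_assoc, Rinv_l in hr1; lra. }
  set (D := (b1 + b2) * (b1 * b2 + 2 * c ^ 2) + c * (b1 ^ 2 + b2 ^ 2 + 4 * b1 * b2)).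
  assert (hD : 0 < D).
  { unfold D. assert (0 < b1*b2) by nra. assert (0 < c^2) by nra.
    assert (0 < b1^2) by nra. assert (0 < b2^2) by nra. nra. }
  assert (Er0 : r0 * D = a*c*(b2-b1)) by (unfold r0; fold D; field; lra).
  assert (hA1 : 0 <= a - b1 * r0).
  { assert (r0 < 0). { assert (a*c*(b2-b1) < 0). { assert (0 < a*c) by nra. nra. } nra. }
    nra. }
  assert (hA2 : 0 <= a + b2 * r0).
  { assert (b2*c*(b1-b2) <= D).
    { unfold D. assert (0 < b1*b2) by nra. assert (0 < c^2) by nra.
      assert (0 < b1^2) by nra. assert (0 < b2^2) by nra. nra. }
    assert (a*(b2*r0)*D = a*(b2*(a*c*(b2-b1)))) by (rewrite <- Er0; ring).
    assert (0 <= a*D + b2*(a*c*(b2-b1))) by nra.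
    assert (0 < a*D) by nra.
    nra. }
  assert (Elast : r0 = (b2 * q20 - b1 * q10) / (b1 + b2)).
  { unfold q10, q20, r0. field. repeat split; try lra. fold D; lra. }
  assert (hq10 : 0 <= q10 /\ forall q', 0 <= q' -> profitG a b1 c q' r0 <= profitG a b1 c q10 r0)
    by (apply gen_opt; auto).
  assert (hq20 : 0 <= q20 /\ forall q', 0 <= q' -> profitG a b2 c q' (-r0) <= profitG a b2 c q20 (-r0)).
  { apply gen_opt; auto. lra. unfold q20. f_equal; ring. }
  destruct hq10 as [hq10 Hp1]. destruct hq20 as [hq20 Hp2].
  split; [|split; [|split; [|split]]]; auto.
  - repeat split; auto.
    + rewrite Elast. apply feas; auto.
    + rewrite Elast. apply feas; auto.
    + intros r' _. rewrite (W_id a b1 b2 c q10 q20 r') by lra. rewrite <- Elast.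
      assert (0 <= (b1+b2)/2*(r' - r0)^2).
      { apply Rmult_le_pos; [lra| apply pow2_ge_0]. }
      lra.
  - intros q1 q2 r [h1 [h2 [hf [G1 [G2 HW]]]]].
    set (rs := (b2*q2-b1*q1)/(b1+b2)).
    assert (Hr : r = rs).
    { specialize (HW rs (feas b1 b2 q1 q2 h1 h2 hb1 hb2)).
      rewrite (W_id a b1 b2 c q1 q2 r) in HW by lra. fold rs in HW.
      assert (0 <= (r-rs)^2) by apply pow2_ge_0.
      assert ((r-rs)^2 = 0) by nra. nra. }
    assert (E1 : r*(b1+b2) = b2*q2 - b1*q1) by (rewrite Hr; unfold rs; field; lra).
    clear HW hf.
    destruct (gen_uniq a b1 c q1 r hb1 hc h1 G1) as [[a1 e1]|[a1 e1]];
    destruct (gen_uniq a b2 c q2 (-r) hb2 hc h2 G2) as [[a2 e2]|[a2 e2]].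
    + assert (F1 : 2*(b1+c)*q1 = a - b1*r) by (rewrite e1; field; lra).
      assert (F2 : 2*(b2+c)*q2 = a + b2*r) by (rewrite e2; field; lra).
      assert (Id : r*D - a*c*(b2-b1) =
         2*(b1+c)*(b2+c)*(r*(b1+b2) - (b2*q2 - b1*q1))
         + b2*(b1+c)*(2*(b2+c)*q2 - (a + b2*r))
         - b1*(b2+c)*(2*(b1+c)*q1 - (a - b1*r))) by (unfold D; ring).
      rewrite E1, F1, F2 in Id.
      assert (RD : r*D = r0*D) by lra.
      assert (Rr : r = r0).
      { apply Rmult_eq_reg_r with D; lra. }
      rewrite Rr in e1, e2. split; [|split]; auto.
      rewrite e2. unfold q20. f_equal. ring.
    + exfalso. assert (0 <= (b1+2*c)*q1) by (apply Rmult_le_pos; lra).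
      assert (F1 : 2*(b1+c)*q1 = a - b1*r) by (rewrite e1; field; lra).
      subst q2. nra.
    + exfalso. assert (0 <= (b2+2*c)*q2) by (apply Rmult_le_pos; lra).
      assert (F2 : 2*(b2+c)*q2 = a + b2*r) by (rewrite e2; field; lra).
      subst q1. nra.
    + exfalso. subst q1 q2. nra.
Qed.
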